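(* Let $q$ be an odd prime power, let $a,b\in\mathbb{F}_q$ with $b\ne0$, and let $n\ge2$ be an integer with $\gcd(n+1,q)=1$. Then $\hat C_n(a,b)$ is LCD if and only if $$a/b\notin\{-\mu/b+\theta^i+\theta^{-i} : 1\le i\le n\}\cup\{\mu/b+\theta^i+\theta^{-i} : 1\le i\le n\},$$ where $\mu\in\mathbb{F}_{q^2}$ satisfies $\mu^2=-1$ and $\theta\in\overline{\mathbb{F}}_q$ is a primitive $2(n+1)$-th root of unity.
   Context: For $a,b\in\mathbb{F}_q$ and $n\ge 2$, $\hat T_n(a,b)$ denotes the $n\times n$ symmetric tridiagonal Toeplitz matrix over $\mathbb{F}_q$ with all diagonal entries equal to $a$, all entries on the first super- and sub-diagonals equal to $b$, and all other entries $0$. $\hat C_n(a,b)$ is the $[2n,n]$ linear code over $\mathbb{F}_q$ with generator matrix $[I_n\mid \hat T_n(a,b)]$. A linear code $C$ is LCD if $C\cap C^\perp=\{0\}$ (Euclidean dual). *)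

(* Defs.v *)
From HB Require Import structures.
From mathcomp Require Import all_boot all_order all_algebra.
Set Implicit Arguments. Unset Strict Implicit. Unset Printing Implicit Defensive.
Import GRing.Theory.
Local Open Scope ring_scope.

Definition tridiagT (F : fieldType) (n : nat) (a b : F) : 'M[F]_n :=
  \matrix_(i < n, j < n)
    if i == j then a
    else if (i.+1 == j :> nat) || (j.+1 == i :> nat) then b else 0.

Definition genC (F : fieldType) (n : nat) (a b : F) : 'M[F]_(n, n + n) :=
  row_mx 1%:M (tridiagT n a b).

Definition lin_code (F : fieldType) (k m : nat) (G : 'M[F]_(k, m)) : pred 'rV[F]_m :=
  fun x => (x <= G)%MS.

Definition dual_code (F : fieldType) (m : nat) (C : pred 'rV[F]_m) (y : 'rV[F]_m) : Prop :=
  forall x, C x -> x *m y^T = 0.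

Definition is_LCD (F : fieldType) (m : nat) (C : pred 'rV[F]_m) : Prop :=
  forall x, C x -> dual_code C x -> x = 0.

(* Main.v *)
Require Import Defs.
From HB Require Import structures.
From mathcomp Require Import all_boot all_order all_algebra.
From mathcomp Require Import ring zify.
Import GRing.Theory.
Local Open Scope ring_scope.

Fixpoint Ef (R : pzRingType) (y : R) (k : nat) {struct k} : R :=
  match k with
  | 0 => 0
  | k'.+1 => match k' with 0 => 1 | k''.+1 => y * Ef R y k' - Ef R y k'' end
  end.
Arguments Ef {R} : simpl never.

Lemma EfSS (R : pzRingType) (y : R) k : Ef y k.+2 = y * Ef y k.+1 - Ef y k.
Proof. by []. Qed.
Lemma Ef0 (R : pzRingType) (y : R) : Ef y 0 = 0. Proof. by []. Qed.
Lemma Ef1 (R : pzRingType) (y : R) : Ef y 1 = 1. Proof. by []. Qed.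

Lemma Ef_ind2 (P : nat -> Prop) : P 0%N -> P 1%N -> (forall k, P k -> P k.+1 -> P k.+2) -> forall k, P k.
Proof.
move=> h0 h1 hS k; suff: P k /\ P k.+1 by case.
by elim: k => [|k [? ?]]; split=> //; apply: hS.
Qed.

Lemma Ef_horner (L : fieldType) (y : L) k : (Ef 'X k).[y] = Ef y k.
Proof.
elim/Ef_ind2: k => [|| k IH1 IH2]; first by rewrite !Ef0 hornerE.
  by rewrite !Ef1 hornerE.
by rewrite (EfSS _ 'X k) (EfSS _ y k) !hornerE IH1 IH2.
Qed.

Lemma Ef_closed (L : fieldType) (t : L) k : t != 0 ->
  (t - t^-1) * Ef (t + t^-1) k = t ^+ k - t ^- k.
Proof.
move=> t0; elim/Ef_ind2: k => [|| k IH1 IH2].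
- by rewrite Ef0 mulr0 expr0 invr1 subrr.
- by rewrite Ef1 mulr1 expr1.
rewrite (EfSS _ _ k) mulrBr mulrCA IH2 IH1 !exprS !invfM.
have u0 : t ^+ k != 0 by rewrite expf_neq0.
field; by rewrite ?t0 ?u0.
Qed.



Lemma Ef_size (L : fieldType) k :
  size (Ef ('X : {poly L}) k) = k /\ ((0 < k)%N -> lead_coef (Ef ('X : {poly L}) k) = 1).
Proof.
elim/Ef_ind2: k => [|| k [s1 _] [s2 l2]].
- by rewrite Ef0 size_poly0.
- by rewrite Ef1 size_poly1 lead_coef1.
have nz : Ef ('X : {poly L}) k.+1 != 0 by rewrite -size_poly_eq0 s2.
have sX : size ('X * Ef ('X : {poly L}) k.+1) = k.+2 by rewrite mulrC size_mulX // s2.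
rewrite (EfSS _ _ k); split.
  by rewrite size_polyDl sX // size_polyN s1.
move=> _; rewrite lead_coefDl ?sX ?size_polyN ?s1 //.
by rewrite mulrC lead_coefMX l2.
Qed.

Lemma prim_nz (L : fieldType) m (z : L) : (0 < m)%N -> m.-primitive_root z -> z != 0.
Proof.
move=> m0 pz; apply/eqP=> z0; have := prim_expr_order pz.
by rewrite z0 expr0n eqn0Ngt m0 /= => /eqP; rewrite eq_sym oner_eq0.
Qed.

Lemma prim_pow_ne1 (L : fieldType) m (z : L) k : m.-primitive_root z ->
  (0 < k)%N -> (k < m)%N -> z ^+ k != 1.
Proof.
move=> pz k0 km; rewrite -(prim_order_dvd pz); apply/negP=> /(dvdn_leq k0).
by rewrite leqNgt km.
Qed.

Arguments prim_nz {L m z}.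
Arguments prim_pow_ne1 {L m z k}.

Definition Yv {L : fieldType} (theta : L) (i : nat) := theta ^+ i + theta ^- i.

Lemma Yv_root (L : fieldType) n (theta : L) i :
  (2 * n.+1)%N.-primitive_root theta -> (1 <= i <= n)%N ->
  Ef (Yv theta i) n.+1 = 0.
Proof.
move=> pz /andP[i1 iN].
have th0 : theta != 0 by apply: prim_nz pz.
set t := theta ^+ i.
have t0 : t != 0 by rewrite expf_neq0.
have h := @Ef_closed _ t n.+1 t0.
have tt : t - t^-1 != 0.
  rewrite subr_eq0; apply/negP=> /eqP e.
  suff : theta ^+ (2 * i)%N != 1 by rewrite mulnC exprM -/t expr2 {2}e mulfV // eqxx.
  by apply: (prim_pow_ne1 pz); rewrite ?muln_gt0 // ltn_pmul2l.
have s1 : (t ^+ n.+1) ^+ 2 = 1.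
  rewrite /t -!exprM (_ : (i * (n.+1 * 2) = (2 * n.+1) * i)%N); last by lia.
  by rewrite exprM (prim_expr_order pz) expr1n.
have sinv : (t ^+ n.+1)^-1 = t ^+ n.+1.
  by rewrite -[LHS]mul1r -s1 expr2 mulrK // unitfE expf_neq0.
move: h; rewrite sinv subrr => /eqP; rewrite mulf_eq0 (negbTE tt) /= => /eqP.
by rewrite /Yv -/t.
Qed.

Lemma Yv_inj (L : fieldType) n (theta : L) i j :
  (2 * n.+1)%N.-primitive_root theta -> (1 <= i <= n)%N -> (1 <= j <= n)%N ->
  Yv theta i = Yv theta j -> i = j.
Proof.
move=> pz /andP[i1 iN] /andP[j1 jN] e.
have th0 : theta != 0 by apply: prim_nz pz.
set t := theta ^+ i in e; set s := theta ^+ j in e.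
have t0 : t != 0 by rewrite expf_neq0.
have s0 : s != 0 by rewrite expf_neq0.
have : (t - s) * (1 - (t * s)^-1) = 0.
  move: e; rewrite /Yv -/t -/s => e.
  rewrite invfM.
  have -> : (t - s) * (1 - t^-1 * s^-1) = (t + t^-1) - (s + s^-1).
    by field; rewrite s0 t0.
  by rewrite e subrr.
move/eqP; rewrite mulf_eq0 !subr_eq0 => /orP[/eqP ts | /eqP ts].
  move/eqP: ts; rewrite /t /s (eq_prim_root_expr pz) /eqP.
  by rewrite !modn_small //; [move/eqP | lia | lia].
have : theta ^+ (i + j) == 1.
  by rewrite exprD -/t -/s -[t * s]invrK -ts invr1.
by rewrite (negbTE (prim_pow_ne1 pz _ _)) //; lia.
Qed.

Arguments Yv_inj {L n theta i j}.

Lemma Ef_root_iff (L : fieldType) n (theta : L) (y : L) :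
  (2 * n.+1)%N.-primitive_root theta ->
  Ef y n.+1 = 0 <-> exists i, (1 <= i <= n)%N /\ y = Yv theta i.
Proof.
move=> pz; split; last by case=> i [hi ->]; apply: Yv_root.
move=> hy.
case: (boolP (y \in map (Yv theta) (iota 1 n))).
  case/mapP=> i; rewrite mem_iota => hi ->; exists i; split=> //.
move=> ny; exfalso.
pose p : {poly L} := Ef 'X n.+1.
have [sz lc] := Ef_size L n.+1.
have p0 : p != 0 by rewrite -size_poly_eq0 /p sz.
have r1 : all (root p) (y :: map (Yv theta) (iota 1 n)).
  rewrite /= /root /p Ef_horner hy eqxx /=; apply/allP=> z /mapP[i].
  rewrite mem_iota => hi ->; rewrite /root Ef_horner Yv_root //.
have r2 : uniq (y :: map (Yv theta) (iota 1 n)).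
  rewrite /= ny /= map_inj_in_uniq ?iota_uniq // => i j; rewrite !mem_iota => hi hj.
  by apply: (Yv_inj pz); lia.
by have := max_poly_roots p0 r1 r2; rewrite /= size_map size_iota /p sz ltnn.
Qed.

Set Implicit Arguments. Unset Strict Implicit.

Definition wv {L : fieldType} {N} (v : 'rV[L]_N) (k : nat) := \sum_(i < N | (i : nat) == k) v 0 i.
Definition Wv {L : fieldType} {N} (v : 'rV[L]_N) (k : nat) := if k is k'.+1 then wv v k' else 0.

Lemma wv_ord (L : fieldType) N (v : 'rV[L]_N) (i : 'I_N) : wv v i = v 0 i.
Proof. by rewrite /wv (big_pred1 i) // => j; rewrite /= eqEord. Qed.

Lemma wv_out (L : fieldType) N (v : 'rV[L]_N) k : (N <= k)%N -> wv v k = 0.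
Proof.
move=> hk; rewrite /wv big_pred0 // => i; apply/negbTE; apply/eqP=> e.
by have := ltn_ord i; rewrite e ltnNge hk.
Qed.

Lemma sumS (L : fieldType) N (v : 'rV[L]_N) k :
  \sum_(i < N | ((i : nat).+1 == k)) v 0 i = Wv v k.
Proof.
case: k => [|k] /=; first by rewrite big_pred0.
by apply: eq_bigl => i.
Qed.

Lemma col_eq (L : fieldType) N (d b : L) (v : 'rV[L]_N) (j : 'I_N) :
  (v *m tridiagT N d b) 0 j = b * Wv v j + d * Wv v j.+1 + b * Wv v j.+2.
Proof.
rewrite mxE /= -sumS /wv !mulr_sumr.
rewrite [X in _ = X + _ + _]big_mkcond [X in _ = _ + X + _]big_mkcond.
rewrite [X in _ = _ + _ + X]big_mkcond -!big_split /=.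
apply: eq_bigr => i _; rewrite !mxE.
rewrite -val_eqE /=.
have : (i < j)%N \/ (j < i)%N \/ (i:nat) = j by lia.
case=> [h|[h|h]].
- have -> : ((i:nat) == j) = false by lia.
  have -> : ((i:nat) == j.+1) = false by lia.
  have -> : ((j:nat).+1 == i) = false by lia.
  by rewrite orbF; case: (_ == _); rewrite !(mulr0, add0r, addr0) // mulrC.
- have -> : ((i:nat) == j) = false by lia.
  have -> : ((i:nat).+1 == j) = false by lia.
  by rewrite /= eq_sym; case: (_ == _); rewrite !(mulr0, add0r, addr0) // mulrC.
- have -> : ((i:nat) == j) = true by lia.
  have -> : ((i:nat).+1 == j) = false by lia.
  have -> : ((i:nat) == j.+1) = false by lia.
  by rewrite !(mulr0, add0r, addr0) // mulrC.
Qed.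

Lemma rec_step (L : fieldType) m (d b : L) (v : 'rV[L]_m.+1) (k : nat) : b != 0 ->
  v *m tridiagT m.+1 d b = 0 -> (k <= m)%N ->
  Wv v k.+2 = (- d / b) * Wv v k.+1 - Wv v k.
Proof.
move=> b0 hv hk.
have := col_eq d b v (Ordinal (hk : (k < m.+1)%N)); rewrite hv mxE /= => e.
apply: (mulfI b0); rewrite mulrBr mulrA mulrCA mulfV // mulr1.
apply/eqP; rewrite -subr_eq0; apply/eqP; rewrite -[RHS](esym e); ring.
Qed.

Lemma Wrow (L : fieldType) m (y : L) : Ef y m.+2 = 0 ->
  forall k, (k <= m.+2)%N -> Wv (\row_(i < m.+1) Ef y i.+1) k = Ef y k.
Proof.
move=> hE k; case: k => [|k] hk; first by rewrite Ef0.
rewrite /=; case: (ltnP k m.+1) => hk'.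
  by rewrite (wv_ord _ (Ordinal hk')) mxE.
rewrite wv_out //; have -> : k = m.+1 by lia.
by rewrite hE.
Qed.

Lemma sing_iff (L : fieldType) m (d b : L) : b != 0 ->
  (exists2 v : 'rV[L]_m.+1, v != 0 & v *m tridiagT m.+1 d b = 0) <-> Ef (- d / b) m.+2 = 0.
Proof.
move=> b0; set y := - d / b; split.
  case=> v v0 hv.
  have key : forall k, (k <= m.+2)%N -> Wv v k = Wv v 1 * Ef y k.
    elim/Ef_ind2 => [|| k IH1 IH2] hk; first by rewrite Ef0 mulr0.
      by rewrite Ef1 mulr1.
    rewrite (rec_step b0 hv) //.
    rewrite IH1; last by lia.
    rewrite IH2; last by lia.
    by rewrite (EfSS _ _ k) /y; ring.
  have := key m.+2 (leqnn _); rewrite /= wv_out // => /esym/eqP.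
  rewrite mulf_eq0 => /orP[/eqP W0|/eqP //].
  case/eqP: v0; apply/rowP=> i; rewrite mxE -wv_ord.
  have := key i.+1; rewrite /= W0 mul0r; apply.
  exact: leqW (ltn_ord i).
move=> hE; exists (\row_i Ef y i.+1).
  apply/eqP=> /rowP /(_ ord0); rewrite !mxE Ef1 => /eqP; by rewrite oner_eq0.
have W := Wrow hE.
apply/rowP=> j; have hj := ltn_ord j.
rewrite col_eq W; last by lia.
rewrite W; last by lia.
rewrite W; last by lia.
rewrite mxE (EfSS _ _ j) /y; field; by rewrite b0.
Qed.

Lemma gram (K : fieldType) n (T : 'M[K]_n) : T^T = T ->
  row_mx 1%:M T *m (row_mx 1%:M T)^T = 1%:M + T *m T.
Proof. by move=> sT; rewrite tr_row_mx mul_row_col trmx1 mul1mx sT. Qed.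

Lemma lcd_iff (K : fieldType) n (T : 'M[K]_n) : T^T = T ->
  is_LCD (lin_code (row_mx 1%:M T)) <-> \det (1%:M + T *m T) != 0.
Proof.
move=> sT; set G := row_mx 1%:M T.
have sM : (1%:M + T *m T)^T = 1%:M + T *m T by rewrite -(gram sT) trmx_mul trmxK.
split.
  move=> H; apply/negP => /det0P [u u0 hu].
  have : u *m G = 0.
    apply: H; first exact: submxMl.
    move=> y /submxP [w ->].
    rewrite trmx_mul !mulmxA -(mulmxA w) (gram sT) -mulmxA.
    have -> : (1%:M + T *m T) *m u^T = 0 by rewrite -sM -trmx_mul hu trmx0.
    by rewrite mulmx0.
  rewrite /G mul_mx_row mulmx1 => /eqP; rewrite row_mx_eq0 => /andP[/eqP u00 _].
  by rewrite u00 eqxx in u0.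
move=> hdet x hx hd.
case/submxP: hx => u xu.
have GX : G *m x^T = 0.
  apply/row_matrixP => i; rewrite rowE mulmxA row0.
  apply: hd; exact: submxMl.
have Mu : (1%:M + T *m T) *m u^T = 0 by rewrite -(gram sT) -mulmxA -trmx_mul -xu.
have un : (1%:M + T *m T) \in unitmx by rewrite unitmxE unitfE.
have : u^T = 0 by rewrite -[u^T]mul1mx -(mulVmx un) -mulmxA Mu mulmx0.
by move/(congr1 trmx); rewrite trmxK trmx0 => u0; rewrite xu u0 mul0mx.
Qed.

Lemma tri_sym (K : fieldType) n (a b : K) : (tridiagT n a b)^T = tridiagT n a b.
Proof. by apply/matrixP=> i j; rewrite !mxE eq_sym orbC. Qed.

Lemma tri_map (F L : fieldType) (f : {rmorphism F -> L}) n (a b : F) :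
  map_mx f (tridiagT n a b) = tridiagT n (f a) (f b).
Proof. by apply/matrixP=> i j; rewrite !mxE; case: ifP => _ //; case: ifP => _ //; rewrite rmorph0. Qed.

Lemma tri_sub (L : fieldType) n (d b c : L) : tridiagT n d b - c%:M = tridiagT n (d - c) b.
Proof.
apply/matrixP=> i j; rewrite !mxE.
by case: (i == j); rewrite ?mulr1n ?mulr0n ?subr0.
Qed.

Lemma Yv_neg (L : fieldType) n (theta : L) i : (2 * n.+1)%N.-primitive_root theta ->
  (1 <= i <= n)%N -> Yv theta (n.+1 - i) = - Yv theta i.
Proof.
move=> pz hi.
have th0 : theta != 0 by apply: prim_nz pz.
have hm : theta ^+ n.+1 = -1.
  have : (theta ^+ n.+1) ^+ 2 == 1 by rewrite -exprM mulnC (prim_expr_order pz).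
  rewrite sqrf_eq1 => /orP[|/eqP //].
  by rewrite (negbTE (prim_pow_ne1 pz _ _)) //; lia.
have ti0 : theta ^+ i != 0 by rewrite expf_neq0.
rewrite /Yv expfB; last by lia.
rewrite hm invfM invrK invrN invr1; field; by rewrite ti0.
Qed.

Lemma shift_iff (L : fieldType) n (theta a' b' c : L) :
  (2 * n.+1)%N.-primitive_root theta -> b' != 0 ->
  (exists j, (1 <= j <= n)%N /\ (- c - a') / b' = Yv theta j) <->
  (exists i, [/\ (1 <= i)%N, (i <= n)%N & a' / b' = - c / b' + theta ^+ i + theta ^- i]).
Proof.
move=> pz b0.
have key : forall i, (1 <= i <= n)%N ->
    ((- c - a') / b' = Yv theta (n.+1 - i)) <-> (a' / b' = - c / b' + theta ^+ i + theta ^- i).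
  move=> i hi; rewrite Yv_neg // /Yv; split=> e.
    have -> : a' / b' = - c / b' - ((- c - a') / b') by field.
    by rewrite e; ring.
  have -> : (- c - a') / b' = - c / b' - a' / b' by field.
  by rewrite e; ring.
split.
  case=> j [hj e]; exists (n.+1 - j)%N; split; try lia.
  apply/key; first by lia.
  by rewrite (_ : (n.+1 - (n.+1 - j) = j)%N) //; lia.
case=> i [h1 h2 e]; exists (n.+1 - i)%N; split; first by lia.
by apply/key; first by lia.
Qed.

Lemma sing_det (L : fieldType) m (theta d b : L) :
  (2 * m.+2)%N.-primitive_root theta -> b != 0 ->
  \det (tridiagT m.+1 d b) == 0 <-> exists j, (1 <= j <= m.+1)%N /\ - d / b = Yv theta j.
Proof.
move=> pz b0; rewrite -(@Ef_root_iff _ m.+1 theta (-d/b) pz) -sing_iff //.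
by split=> /det0P.
Qed.

Theorem theorem2p7 (F : finFieldType) (L : fieldType) (iota : {rmorphism F -> L})
    (n : nat) (a b : F) (mu theta : L) :
  odd #|F| ->
  b != 0 ->
  (2 <= n)%N ->
  coprime n.+1 #|F| ->
  mu ^+ 2 = -1 ->
  (2 * n.+1)%N.-primitive_root theta ->
  is_LCD (lin_code (genC n a b)) <->
  ~ (exists i : nat, [/\ (1 <= i)%N, (i <= n)%N &
        (iota (a / b) = - mu / iota b + theta ^+ i + theta ^- i \/
         iota (a / b) = mu / iota b + theta ^+ i + theta ^- i)]).
Proof.
move=> _ b0 n2 _ mu2 pz.
have b'0 : iota b != 0 by rewrite fmorph_eq0.
rewrite /genC (lcd_iff (tri_sym _ _ _)).
case: n n2 pz => [|m] // _ pz.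
set T := tridiagT m.+1 a b.
set T' := tridiagT m.+1 (iota a) (iota b).
have hmap : map_mx iota (1%:M + T *m T) = (T' - mu%:M) *m (T' - (- mu)%:M).
  rewrite map_mxD map_mx1 map_mxM tri_map -/T'.
  rewrite mulmxBl !mulmxBr mul_mx_scalar !mul_scalar_mx scale_scalar_mx mulrN -expr2 mu2 opprK scaleNr.
  by rewrite opprK opprB addrCA addrK.
have h1 : \det (tridiagT m.+1 (iota a - mu) (iota b)) == 0 <->
    exists i, [/\ (1 <= i)%N, (i <= m.+1)%N & iota a / iota b = mu / iota b + theta ^+ i + theta ^- i].
  rewrite (sing_det _ pz b'0) opprB.
  by have := @shift_iff _ m.+1 theta (iota a) (iota b) (- mu) pz b'0; rewrite opprK.
have h2 : \det (tridiagT m.+1 (iota a - - mu) (iota b)) == 0 <->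
    exists i, [/\ (1 <= i)%N, (i <= m.+1)%N & iota a / iota b = - mu / iota b + theta ^+ i + theta ^- i].
  by rewrite (sing_det _ pz b'0) -shift_iff // opprB.
rewrite -(fmorph_eq0 iota) -det_map_mx hmap det_mulmx mulf_eq0 !tri_sub negb_or fmorph_div.
split.
  move=> /andP[n1 n2] [i [i1 i2 [e|e]]].
    by move/negP: n2; apply; apply/h2; exists i.
  by move/negP: n1; apply; apply/h1; exists i.
move=> H; apply/andP; split; apply/negP.
  by move=> /h1 [i [i1 i2 e]]; apply: H; exists i; split=> //; right.
by move=> /h2 [i [i1 i2 e]]; apply: H; exists i; split=> //; left.
Qed.
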